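(* For any two randomized policies $\boldsymbol\theta,\boldsymbol\theta'\in\boldsymbol\Theta$, $$J^{\boldsymbol\theta'}_{\mu,\sigma}-J^{\boldsymbol\theta}_{\mu,\sigma}=\sum_{i\in\mathcal S}\pi^{\boldsymbol\theta'}(i)\sum_{a\in\mathcal A}(\theta'_{i,a}-\theta_{i,a})\Big\{\sum_{j\in\mathcal S}p^a(i,j)g^{\boldsymbol\theta}(j)+r(i,a)-\beta r(i,a)^2+2\beta J^{\boldsymbol\theta}_\mu r(i,a)\Big\}+\beta\big(J^{\boldsymbol\theta'}_\mu-J^{\boldsymbol\theta}_\mu\big)^2 .$$
   Context: Let $\mathcal S=\{1,\dots,S\}$ be a finite state space and $\mathcal A$ a finite action set, with transition probabilities $p^a(i,j)\ge0$ ($\sum_j p^a(i,j)=1$) and rewards $r(i,a)\in\mathbb R$. Standing assumption: for every deterministic map $d:\mathcal S\to\mathcal A$, the matrix with entries $p^{d(i)}(i,j)$ is irreducible. The randomized policy space is $\boldsymbol\Theta=\{\boldsymbol\theta=(\theta_{i,a})_{i\in\mathcal S,a\in\mathcal A}:\theta_{i,a}\ge0,\ \sum_a\theta_{i,a}=1\ \forall i\}$, where $\theta_{i,a}$ is the probability of choosing action $a$ in state $i$. Under $\boldsymbol\theta$ the transition matrix is $P^{\boldsymbol\theta}(i,j)=\sum_a p^a(i,j)\theta_{i,a}$; it is irreducible (by the standing assumption) with unique stationary distribution $\boldsymbol\pi^{\boldsymbol\theta}$ having positive entries. The mean is $J^{\boldsymbol\theta}_\mu=\sum_i\pi^{\boldsymbol\theta}(i)\sum_a\theta_{i,a}r(i,a)$;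 for fixed $\beta>0$ the cost is $f^{\boldsymbol\theta}(i)=\sum_a\theta_{i,a}[r(i,a)-\beta(r(i,a)-J^{\boldsymbol\theta}_\mu)^2]$ and the mean-variance combined metric is $J^{\boldsymbol\theta}_{\mu,\sigma}=\sum_i\pi^{\boldsymbol\theta}(i)f^{\boldsymbol\theta}(i)$. The potential $\mathbf g^{\boldsymbol\theta}$ is any solution of $\mathbf g^{\boldsymbol\theta}=\mathbf f^{\boldsymbol\theta}-J^{\boldsymbol\theta}_{\mu,\sigma}\mathbf 1+P^{\boldsymbol\theta}\mathbf g^{\boldsymbol\theta}$ (unique up to adding a constant vector). *)

(* Defs.v *)
From mathcomp Require Import all_boot all_order all_algebra.
Set Implicit Arguments. Unset Strict Implicit. Unset Printing Implicit Defensive.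
Import Order.TTheory GRing.Theory Num.Theory.
Local Open Scope ring_scope.

(* p a i j = p^a(i,j) *)
Definition transition_kernel (R : realFieldType) (S A : finType)
  (p : A -> S -> S -> R) : Prop :=
  (forall a i j, 0 <= p a i j) /\ (forall a i, \sum_(j : S) p a i j = 1).

Definition irreducible (R : realFieldType) (S : finType) (P : S -> S -> R) : Prop :=
  forall i j : S, connect [rel x y | 0 < P x y] i j.

Definition all_deterministic_irreducible (R : realFieldType) (S A : finType)
  (p : A -> S -> S -> R) : Prop :=
  forall d : S -> A, irreducible (fun i j => p (d i) i j).

Definition is_policy (R : realFieldType) (S A : finType) (th : S -> A -> R) : Prop :=
  (forall i a, 0 <= th i a) /\ (forall i, \sum_(a : A) th i a = 1).

Definition Ptheta (R : realFieldType) (S A : finType)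
  (p : A -> S -> S -> R) (th : S -> A -> R) (i j : S) : R :=
  \sum_(a : A) p a i j * th i a.

Definition stationary (R : realFieldType) (S : finType)
  (P : S -> S -> R) (pi : S -> R) : Prop :=
  [/\ forall i, 0 <= pi i, \sum_(i : S) pi i = 1 &
      forall j, \sum_(i : S) pi i * P i j = pi j].

(* J_mu^theta, given the stationary distribution pi of P^theta *)
Definition Jmu (R : realFieldType) (S A : finType)
  (r : S -> A -> R) (th : S -> A -> R) (pi : S -> R) : R :=
  \sum_(i : S) pi i * \sum_(a : A) th i a * r i a.

Definition fcost (R : realFieldType) (S A : finType) (beta : R)
  (r : S -> A -> R) (th : S -> A -> R) (pi : S -> R) (i : S) : R :=
  \sum_(a : A) th i a * (r i a - beta * (r i a - Jmu r th pi) ^+ 2).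

Definition Jms (R : realFieldType) (S A : finType) (beta : R)
  (r : S -> A -> R) (th : S -> A -> R) (pi : S -> R) : R :=
  \sum_(i : S) pi i * fcost beta r th pi i.

Definition potential (R : realFieldType) (S A : finType) (beta : R)
  (p : A -> S -> S -> R) (r : S -> A -> R) (th : S -> A -> R)
  (pi : S -> R) (g : S -> R) : Prop :=
  forall i, g i = fcost beta r th pi i - Jms beta r th pi
                  + \sum_(j : S) Ptheta p th i j * g j.

(* Main.v *)
Require Import Defs.
From mathcomp Require Import all_boot all_order all_algebra.
From mathcomp Require Import ring.
Import Order.TTheory GRing.Theory Num.Theory.
Local Open Scope ring_scope.

Lemma sumPg (R : realFieldType) (S A : finType) (p : A -> S -> S -> R)
  (th : S -> A -> R) (g : S -> R) i :
  \sum_(a : A) th i a * (\sum_(j : S) p a i j * g j) =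
  \sum_(j : S) Ptheta p th i j * g j.
Proof.
under eq_bigr => a _ do rewrite mulr_sumr.
rewrite exchange_big /=; apply: eq_bigr => j _.
rewrite /Ptheta mulr_suml; apply: eq_bigr => a _; ring.
Qed.

Lemma fcostE (R : realFieldType) (S A : finType) (beta : R)
  (r : S -> A -> R) (th : S -> A -> R) (pi : S -> R) i :
  is_policy th ->
  fcost beta r th pi i = \sum_(a : A) th i a * (r i a - beta * r i a ^+ 2)
     + 2 * beta * Jmu r th pi * \sum_(a : A) th i a * r i a
     - beta * Jmu r th pi ^+ 2.
Proof.
move=> [_ h1]; rewrite /fcost.
set J := Jmu r th pi.
have -> : \sum_(a : A) th i a * (r i a - beta * (r i a - J) ^+ 2) =
  \sum_(a : A) (th i a * (r i a - beta * r i a ^+ 2)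
     + 2 * beta * J * (th i a * r i a) - beta * J ^+ 2 * th i a).
  by apply: eq_bigr => a _; ring.
by rewrite !big_split /= sumrN -!mulr_sumr h1 mulr1.
Qed.

Lemma sum_fcost (R : realFieldType) (S A : finType) (beta : R)
  (r : S -> A -> R) (th : S -> A -> R) (pi : S -> R) (w : S -> R) :
  is_policy th -> \sum_(i : S) w i = 1 ->
  \sum_(i : S) w i * fcost beta r th pi i =
  \sum_(i : S) w i * \sum_(a : A) th i a * (r i a - beta * r i a ^+ 2)
     + 2 * beta * Jmu r th pi * Jmu r th w
     - beta * Jmu r th pi ^+ 2.
Proof.
move=> hp hw.
under eq_bigr => i _ do rewrite (fcostE _ _ _ _ _ _ _ _ hp).
set J := Jmu r th pi.
have -> : \sum_(i : S) w i * (\sum_(a : A) th i a * (r i a - beta * r i a ^+ 2)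
   + 2 * beta * J * (\sum_(a : A) th i a * r i a) - beta * J ^+ 2) =
  \sum_(i : S) (w i * (\sum_(a : A) th i a * (r i a - beta * r i a ^+ 2))
   + 2 * beta * J * (w i * (\sum_(a : A) th i a * r i a)) - beta * J ^+ 2 * w i).
  by apply: eq_bigr => i _; ring.
by rewrite !big_split /= sumrN -!mulr_sumr hw mulr1.
Qed.

Theorem mainTheorem7 (R : realFieldType) (S A : finType)
  (p : A -> S -> S -> R) (r : S -> A -> R) (beta : R)
  (th th' : S -> A -> R) (pi pi' g : S -> R) :
  transition_kernel p ->
  all_deterministic_irreducible p ->
  0 < beta ->
  is_policy th -> is_policy th' ->
  stationary (Ptheta p th) pi ->
  stationary (Ptheta p th') pi' ->
  potential beta p r th pi g ->
  Jms beta r th' pi' - Jms beta r th pi =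
    \sum_(i : S) pi' i * \sum_(a : A) (th' i a - th i a) *
       (\sum_(j : S) p a i j * g j + r i a - beta * r i a ^+ 2
        + 2 * beta * Jmu r th pi * r i a)
    + beta * (Jmu r th' pi' - Jmu r th pi) ^+ 2.
Proof.
move=> _ _ _ hp hp' [_ hs1 _] [_ hs1' hst'] hpot.
set J := Jmu r th pi.
set J' := Jmu r th' pi'.
set M := Jms beta r th pi.
have pt : forall i, \sum_(a : A) (th' i a - th i a) *
       (\sum_(j : S) p a i j * g j + r i a - beta * r i a ^+ 2
        + 2 * beta * J * r i a) =
   \sum_(j : S) Ptheta p th' i j * g j
   + \sum_(a : A) th' i a * (r i a - beta * r i a ^+ 2)
   + 2 * beta * J * \sum_(a : A) th' i a * r i a - g i - M - beta * J ^+ 2.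
  move=> i.
  have -> : \sum_(a : A) (th' i a - th i a) *
       (\sum_(j : S) p a i j * g j + r i a - beta * r i a ^+ 2
        + 2 * beta * J * r i a) =
    \sum_(a : A) (th' i a * (\sum_(j : S) p a i j * g j)
     - th i a * (\sum_(j : S) p a i j * g j)
     + th' i a * (r i a - beta * r i a ^+ 2)
     + 2 * beta * J * (th' i a * r i a)
     - (th i a * (r i a - beta * r i a ^+ 2) + 2 * beta * J * (th i a * r i a))).
    by apply: eq_bigr => a _; ring.
  rewrite !big_split /= !sumrN big_split /= -!mulr_sumr !sumPg.
  have hg := hpot i. rewrite (fcostE _ _ _ _ _ _ _ _ hp) -/J -/M in hg.
  have e : \sum_(j : S) Ptheta p th i j * g j = g i -
     (\sum_(a : A) th i a * (r i a - beta * r i a ^+ 2)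
     + 2 * beta * J * \sum_(a : A) th i a * r i a - beta * J ^+ 2 - M).
    by rewrite [in RHS]hg; ring.
  rewrite e; ring.
under eq_bigr => i _ do rewrite pt.
have -> : \sum_(i : S) pi' i *
     (\sum_(j : S) Ptheta p th' i j * g j
      + \sum_(a : A) th' i a * (r i a - beta * r i a ^+ 2)
      + 2 * beta * J * (\sum_(a : A) th' i a * r i a) - g i - M - beta * J ^+ 2) =
   \sum_(i : S) (pi' i * (\sum_(j : S) Ptheta p th' i j * g j)
      + pi' i * (\sum_(a : A) th' i a * (r i a - beta * r i a ^+ 2))
      + 2 * beta * J * (pi' i * (\sum_(a : A) th' i a * r i a)) - pi' i * g i
      - (M + beta * J ^+ 2) * pi' i).
  by apply: eq_bigr => i _; ring.
rewrite !big_split /= !sumrN -!mulr_sumr hs1' mulr1.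
have -> : \sum_(i : S) pi' i * (\sum_(j : S) Ptheta p th' i j * g j) =
          \sum_(j : S) pi' j * g j.
  under eq_bigr => i _ do rewrite mulr_sumr.
  rewrite exchange_big /=; apply: eq_bigr => j _.
  rewrite -hst' mulr_suml; apply: eq_bigr => i _; ring.
rewrite /Jms (sum_fcost _ _ _ _ _ _ _ _ hp' hs1') -/J' /J'.
rewrite -/(Jmu r th' pi').
set J2 := Jmu r th' pi'.
set B := \sum_(i : S) pi' i * \sum_(a : A) th' i a * (r i a - beta * r i a ^+ 2).
rewrite -/M.
rewrite /Jmu -/J2.
ring.
Qed.
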